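(* Let $a,b,c\geq 1$ be integers, put $v=a+b+c+1$ and $L=\{1^a,2^b,4^c\}$, and suppose $4\leq\lfloor v/2\rfloor$. Then there exists a Hamiltonian path $H$ of $K_v$ with $\ell(H)=L$ if and only if for every divisor $d$ of $v$, the number of elements of $L$ (with multiplicity) that are multiples of $d$ does not exceed $v-d$.
   Context: $K_v$ is the complete graph on $\{0,1,\dots,v-1\}$. The length of an edge $[x,y]$ is $\ell(x,y)=\min(|x-y|,\,v-|x-y|)$, and for a subgraph $\Gamma$, $\ell(\Gamma)$ is the multiset of lengths of its edges. $\{1^a,2^b,4^c\}$ is the multiset with $a$ copies of $1$, $b$ copies of $2$, $c$ copies of $4$. (The paper phrases this as ''$\mathrm{BHR}(\{1^a,2^b,4^c\})$ holds''.) *)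

(* Defs.v *)
From mathcomp Require Import all_boot.
Set Implicit Arguments. Unset Strict Implicit. Unset Printing Implicit Defensive.

Definition absdiff (x y : nat) : nat := (x - y) + (y - x).

(* length of the edge [x,y] of K_v on vertex set {0,...,v-1} *)
Definition edge_len (v x y : nat) : nat := minn (absdiff x y) (v - absdiff x y).

Definition ham_path (v : nat) (p : seq nat) : Prop := perm_eq p (iota 0 v).

Definition path_lengths (v : nat) (p : seq nat) : seq nat :=
  [seq edge_len v e.1 e.2 | e <- zip p (behead p)].

Definition L124 (a b c : nat) : seq nat := nseq a 1 ++ nseq b 2 ++ nseq c 4.

(* Main.v *)
Require Import Defs.
From mathcomp Require Import all_boot.
From mathcomp Require Import zify.
Set Implicit Arguments. Unset Strict Implicit. Unset Printing Implicit Defensive.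

Fixpoint ap (r n : nat) : seq nat := if n is n'.+1 then r :: ap (r+4) n' else [::].
Definition lin (p : seq nat) := if p is x :: s then pairmap absdiff x s else [::].

Lemma count_cons (T : Type) (a : pred T) x s : count a (x :: s) = a x + count a s.
Proof. by []. Qed.

Lemma absdiffC x y : absdiff x y = absdiff y x.
Proof. rewrite /absdiff; lia. Qed.

Lemma ap_S r n : ap r n.+1 = r :: ap (r + 4) n. Proof. by []. Qed.

Lemma size_ap r n : size (ap r n) = n.
Proof. by elim: n r => //= n IH r; rewrite IH. Qed.

Lemma ap_map r n : ap (r + 4) n = map (addn 4) (ap r n).
Proof. elim: n r => //= n IH r; by rewrite IH addnC. Qed.

Lemma ap_rcons r n : ap r n.+1 = rcons (ap r n) (r + 4 * n).
Proof.
elim: n r => [|n IH] r; first by rewrite /= addn0.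
change (ap r n.+2) with (r :: ap (r+4) n.+1).
by rewrite IH /=; congr (_ :: rcons _ _); lia.
Qed.

Lemma lin_ap r n : lin (ap r n.+1) = nseq n 4.
Proof.
elim: n r => // n IH r.
change (lin (ap r n.+2)) with (absdiff r (r+4) :: lin (ap (r+4) n.+1)).
rewrite IH /=.
by rewrite /absdiff (_ : r - (r+4) + (r + 4 - r) = 4) //; lia.
Qed.

Lemma lin_rcons x s y : lin (rcons (x :: s) y) = rcons (lin (x :: s)) (absdiff (last x s) y).
Proof. by rewrite /= -cats1 pairmap_cat cats1. Qed.

Lemma lin_rev p : lin (rev p) = rev (lin p).
Proof.
case: p => // x s; elim: s x => // y s IH x.
have E : rev (y :: s) = last y s :: rev (belast y s).
  by rewrite lastI rev_rcons.
rewrite rev_cons E lin_rcons -E IH [in RHS]/= rev_cons; congr rcons.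
have : last 0 (rev (y :: s)) = y by rewrite rev_cons last_rcons.
rewrite E /= => ->; by rewrite absdiffC.
Qed.

Lemma lin_cat s1 s2 : s1 != [::] -> s2 != [::] ->
  lin (s1 ++ s2) = lin s1 ++ absdiff (last 0 s1) (head 0 s2) :: lin s2.
Proof.
case: s1 => // x s1 _; case: s2 => // y s2 _.
by rewrite /= pairmap_cat.
Qed.

Lemma head_cat0 (s t : seq nat) : s != [::] -> head 0 (s ++ t) = head 0 s.
Proof. by case: s. Qed.

Lemma rev_ap r n : rev (ap r n.+1) = (r + 4 * n) :: rev (ap r n).
Proof. by rewrite ap_rcons rev_rcons. Qed.

Lemma head_ap r n : head 0 (ap r n.+1) = r. Proof. by []. Qed.
Lemma last_ap r n : last 0 (ap r n.+1) = r + 4 * n.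
Proof. by rewrite ap_rcons last_rcons. Qed.
Lemma head_rev_ap r n : head 0 (rev (ap r n.+1)) = r + 4 * n.
Proof. by rewrite rev_ap. Qed.
Lemma last_rev_ap r n : last 0 (rev (ap r n.+1)) = r.
Proof. by rewrite /= rev_cons last_rcons. Qed.
Lemma lin_rev_ap r n : lin (rev (ap r n.+1)) = nseq n 4.
Proof. by rewrite lin_rev lin_ap rev_nseq. Qed.

Lemma rows_perm k j : j < 4 ->
  perm_eq (ap 0 (k + (0 < j)) ++ ap 1 (k + (1 < j)) ++ ap 2 (k + (2 < j)) ++ ap 3 k)
          (iota 0 (4 * k + j)).
Proof.
move=> hj; elim: k => [|k IH].
  by case: j hj => [|[|[|[|j]]]].
have -> : 4 * k.+1 + j = 4 + (4 * k + j) by lia.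
rewrite !addSn !ap_S !ap_map add0n /=.
have -> : iota 4 (4*k+j) = map (addn 4) (iota 0 (4*k+j)) by rewrite -iotaDl addn0.
apply/permP => P; move: (permP IH (preim (addn 4) P)).
rewrite /=; repeat rewrite ?count_cat ?count_cons ?count_map; lia.
Qed.

Lemma rows_perm' k j n0 n1 n2 : j < 4 -> n0 = k + (0 < j) -> n1 = k + (1 < j) -> n2 = k + (2 < j) ->
  perm_eq (ap 0 n0 ++ ap 1 n1 ++ ap 2 n2 ++ ap 3 k) (iota 0 (4 * k + j)).
Proof. by move=> hj -> -> ->; apply: rows_perm. Qed.

Lemma last_cat0 (s t : seq nat) : t != [::] -> last 0 (s ++ t) = last 0 t.
Proof. by case: t => // y t _; rewrite last_cat; case: s. Qed.

Ltac ne_tac := rewrite -size_eq0 ?size_cat ?size_rev ?size_ap; lia.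
Ltac lin_simpl := repeat (rewrite lin_cat; [| ne_tac | ne_tac]);
  repeat (rewrite head_cat0; [|ne_tac]);
  repeat (rewrite last_cat0; [|ne_tac]);
  rewrite ?lin_ap ?lin_rev_ap ?head_ap ?head_rev_ap ?last_ap ?last_rev_ap.
Ltac ev := repeat match goal with |- context [absdiff ?x ?y] =>
  first [ have -> : absdiff x y = 1 by rewrite /absdiff; lia
        | have -> : absdiff x y = 2 by rewrite /absdiff; lia
        | have -> : absdiff x y = 4 by rewrite /absdiff; lia ] end.
Ltac cnt := let P := fresh "P" in apply/permP => P; rewrite /=;
  repeat rewrite ?count_cat ?count_cons ?count_nseq ?count_rev;
  case: (P 1); case: (P 2); case: (P 4) => /=; lia.
Ltac permtac J kk n0 n1 n2 := let R := fresh in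
    have R := @rows_perm' kk J n0 n1 n2 isT ltac:(by rewrite /= ?addn1 ?addn0)
      ltac:(by rewrite /= ?addn1 ?addn0) ltac:(by rewrite /= ?addn1 ?addn0);
    apply: perm_trans R;
    let P := fresh "P" in apply/permP => P; repeat rewrite ?count_cat ?count_rev; lia.
Ltac fam J k n0 n1 n2 := split;
  [ ne_tac | lin_simpl; lia | lin_simpl; lia | permtac J k.+1 n0 n1 n2 | lin_simpl; ev; cnt ].
Ltac fam4 J k n0 n1 n2 := split;
  [ ne_tac | lin_simpl; lia | permtac J k.+1 n0 n1 n2 | lin_simpl; ev; cnt ].
Ltac ev2 := repeat match goal with |- context [minn ?x ?y] =>
  first [ have -> : minn x y = 1 by rewrite /absdiff; lia
        | have -> : minn x y = 2 by rewrite /absdiff; lia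
        | have -> : minn x y = 4 by rewrite /absdiff; lia ] end.
Ltac famc J k n0 n1 n2 := split;
  [ permtac J k.+2 n0 n1 n2 | lin_simpl; repeat (rewrite ?map_cat ?map_nseq /=); ev2; cnt ].

Definition S12 (J k : nat) (p : seq nat) : Prop := [/\ p != [::], head 0 p = (4 * k.+1 + J).-1,
  last 0 p = (4 * k.+1 + J).-2, perm_eq p (iota 0 (4 * k.+1 + J)) &
  perm_eq (lin p) (1 :: 2 :: 2 :: nseq (4 * k + J) 4)].
Definition S21 (J k : nat) (p : seq nat) : Prop := [/\ p != [::], head 0 p = (4 * k.+1 + J).-1,
  perm_eq p (iota 0 (4 * k.+1 + J)) &
  perm_eq (lin p) (1 :: 1 :: 2 :: nseq (4 * k + J) 4)].
Definition SC (J k : nat) (p : seq nat) : Prop := let v := 4 * k.+2 + J in perm_eq p (iota 0 v) /\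
  perm_eq (map (fun d => minn d (v - d)) (lin p)) (1 :: 2 :: nseq (v - 3) 4).

Lemma f12_0 k : exists p, S12 0 k p.
Proof. exists (rev (ap 3 k.+1) ++ ap 1 k.+1 ++ rev (ap 0 k.+1) ++ ap 2 k.+1). fam 0 k k.+1 k.+1 k.+1. Qed.
Lemma f12_1 k : exists p, S12 1 k p.
Proof. exists (rev (ap 0 k.+2) ++ ap 2 k.+1 ++ rev (ap 1 k.+1) ++ ap 3 k.+1). fam 1 k k.+2 k.+1 k.+1. Qed.
Lemma f12_2 k : exists p, S12 2 k p.
Proof. exists (rev (ap 1 k.+2) ++ ap 3 k.+1 ++ rev (ap 2 k.+1) ++ ap 0 k.+2). fam 2 k k.+2 k.+2 k.+1. Qed.
Lemma f12_3 k : exists p, S12 3 k p.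
Proof. exists (rev (ap 2 k.+2) ++ ap 0 k.+2 ++ rev (ap 3 k.+1) ++ ap 1 k.+2). fam 3 k k.+2 k.+2 k.+2. Qed.
Lemma f21_0 k : exists p, S21 0 k p.
Proof. exists (rev (ap 3 k.+1) ++ ap 2 k.+1 ++ rev (ap 0 k.+1) ++ ap 1 k.+1). fam4 0 k k.+1 k.+1 k.+1. Qed.
Lemma f21_1 k : exists p, S21 1 k p.
Proof. exists (rev (ap 0 k.+2) ++ ap 1 k.+1 ++ rev (ap 3 k.+1) ++ ap 2 k.+1). fam4 1 k k.+2 k.+1 k.+1. Qed.
Lemma f21_2 k : exists p, S21 2 k p.
Proof. exists (rev (ap 1 k.+2) ++ ap 0 k.+2 ++ rev (ap 2 k.+1) ++ ap 3 k.+1). fam4 2 k k.+2 k.+2 k.+1. Qed.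
Lemma f21_3 k : exists p, S21 3 k p.
Proof. exists (rev (ap 2 k.+2) ++ ap 3 k.+1 ++ rev (ap 1 k.+2) ++ ap 0 k.+2). fam4 3 k k.+2 k.+2 k.+2. Qed.
Lemma fc_1 k : exists p, SC 1 k p.
Proof. exists (ap 0 k.+3 ++ ap 1 k.+2 ++ rev (ap 2 k.+2) ++ rev (ap 3 k.+2)). famc 1 k k.+3 k.+2 k.+2. Qed.
Lemma fc_2 k : exists p, SC 2 k p.
Proof. exists (ap 0 k.+3 ++ rev (ap 2 k.+2) ++ ap 1 k.+3 ++ ap 3 k.+2). famc 2 k k.+3 k.+3 k.+2. Qed.
Lemma fc_3 k : exists p, SC 3 k p.
Proof. exists (rev (ap 0 k.+3) ++ rev (ap 1 k.+3) ++ ap 2 k.+3 ++ ap 3 k.+2). famc 3 k k.+3 k.+3 k.+3. Qed.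

Lemma iota_rcons m : iota 0 m.+1 = rcons (iota 0 m) m.
Proof. by rewrite -addn1 iotaD cats1. Qed.

Lemma op1 n s L α : perm_eq (n :: s) (iota 0 n.+1) -> perm_eq (lin (n :: s)) L ->
  exists s', perm_eq ((n + α) :: s') (iota 0 (n + α).+1) /\
             perm_eq (lin ((n + α) :: s')) (nseq α 1 ++ L).
Proof.
move=> hp hl; elim: α => [|α [s' [hp' hl']]]; first by exists s; rewrite addn0.
exists ((n + α) :: s'); rewrite addnS; split.
  by rewrite iota_rcons perm_sym perm_rcons perm_cons perm_sym.
rewrite [lin _]/= -/(lin ((n + α) :: s')) /=.
have -> : absdiff (n + α).+1 (n + α) = 1 by rewrite /absdiff; lia.
by rewrite perm_cons.
Qed.

Lemma op2 n s L β : 1 <= n -> last n s = n.-1 -> perm_eq (n :: s) (iota 0 n.+1) ->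
  perm_eq (lin (n :: s)) L ->
  exists s', [/\ last (n + β) s' = (n + β).-1, perm_eq ((n + β) :: s') (iota 0 (n + β).+1) &
             perm_eq (lin ((n + β) :: s')) (nseq β 2 ++ L)].
Proof.
move=> hn hlast hp hl; elim: β => [|β [s' [hla' hp' hl']]]; first by exists s; rewrite addn0.
set m := n + β in hla' hp' hl' *.
have Eq : rev (m :: s') = m.-1 :: rev (belast m s') by rewrite lastI rev_rcons hla'.
exists (rev (m :: s')); rewrite addnS; split.
- by rewrite rev_cons last_rcons.
- by rewrite iota_rcons perm_sym perm_rcons perm_cons perm_sym perm_rev.
rewrite Eq [lin _]/= -/(lin (m.-1 :: rev (belast m s'))) -Eq lin_rev /=.
have -> : absdiff m.+1 m.-1 = 2 by rewrite /absdiff; lia.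
by rewrite perm_cons perm_rev.
Qed.

Lemma decomp N : 5 <= N -> exists k J, J < 4 /\ N = 4 * k.+1 + J.
Proof.
move=> hN; exists (N %/ 4).-1, (N %% 4); split; first by rewrite ltn_mod.
have := divn_eq N 4; lia.
Qed.

Lemma base12 N : 5 <= N -> exists x s, [/\ x = N.-1, last x s = N.-2,
  perm_eq (x :: s) (iota 0 N) & perm_eq (lin (x :: s)) (1 :: 2 :: 2 :: nseq (N - 4) 4)].
Proof.
move=> /decomp [k [J [hJ ->]]].
have [p [hne hh hla hp hl]] : exists p, S12 J k p.
  by case: J hJ => [|[|[|[|J]]]] // _; [apply: f12_0|apply: f12_1|apply: f12_2|apply: f12_3].
case: p hne hh hla hp hl => // x s _ /= hh hla hp hl.
exists x, s; split => //; rewrite (_ : 4 * k.+1 + J - 4 = 4 * k + J) //; lia.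
Qed.

Lemma base21 N : 5 <= N -> exists x s, [/\ x = N.-1,
  perm_eq (x :: s) (iota 0 N) & perm_eq (lin (x :: s)) (1 :: 1 :: 2 :: nseq (N - 4) 4)].
Proof.
move=> /decomp [k [J [hJ ->]]].
have [p [hne hh hp hl]] : exists p, S21 J k p.
  by case: J hJ => [|[|[|[|J]]]] // _; [apply: f21_0|apply: f21_1|apply: f21_2|apply: f21_3].
case: p hne hh hp hl => // x s _ /= hh hp hl.
exists x, s; split => //; rewrite (_ : 4 * k.+1 + J - 4 = 4 * k + J) //; lia.
Qed.

Ltac cnt2 := let P := fresh "P" in apply/permP => P; rewrite /L124 /=;
  repeat rewrite ?count_cat ?count_cons ?count_nseq ?count_rev;
  case: (P 1); case: (P 2); case: (P 4) => /=; lia.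

Lemma linear a b c : 1 <= a -> 1 <= b -> 1 <= c -> 3 <= a + b ->
  exists p, perm_eq p (iota 0 (a + b + c + 1)) /\ perm_eq (lin p) (L124 a b c).
Proof.
move=> ha hb hc hab.
have hN : 5 <= c + 4 by lia.
case: (leqP 2 b) => hb2.
  have [x [s [hx hla hp hl]]] := base12 hN.
  have hx3 : x = c + 3 by rewrite hx -subn1; lia.
  have hn : 1 <= x by lia.
  have hla' : last x s = x.-1 by rewrite hla hx.
  have hp' : perm_eq (x :: s) (iota 0 x.+1) by rewrite (_ : x.+1 = c + 4) //; lia.
  have [s1 [_ hp1 hl1]] := op2 (b - 2) hn hla' hp' hl.
  have [s2 [hp2 hl2]] := op1 (a - 1) hp1 hl1.
  exists ((x + (b - 2) + (a - 1)) :: s2); split.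
    by rewrite (_ : a + b + c + 1 = (x + (b - 2) + (a - 1)).+1) //; lia.
  apply: perm_trans; first exact: hl2.
  rewrite (_ : c + 4 - 4 = c) in hl1 hl2 *; last lia.
  cnt2.
have hb1 : b = 1 by lia.
have [x [s [hx hp hl]]] := base21 hN.
have hx3 : x = c + 3 by rewrite hx -subn1; lia.
have hp' : perm_eq (x :: s) (iota 0 x.+1) by rewrite (_ : x.+1 = c + 4) //; lia.
have [s2 [hp2 hl2]] := op1 (a - 2) hp' hl.
exists ((x + (a - 2)) :: s2); split.
  by rewrite (_ : a + b + c + 1 = (x + (a - 2)).+1) //; lia.
apply: perm_trans; first exact: hl2.
rewrite (_ : c + 4 - 4 = c) in hl hl2 *; last lia.
rewrite hb1; cnt2.
Qed.

Lemma cyclic c : 5 <= c -> ~~ (4 %| c + 3) ->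
  exists p, perm_eq p (iota 0 (c + 3)) /\
    perm_eq (map (fun d => minn d (c + 3 - d)) (lin p)) (L124 1 1 c).
Proof.
move=> hc h4.
have [k [J [hJ hv]]] : exists k J, J < 4 /\ c + 3 = 4 * k.+2 + J.
  exists ((c + 3) %/ 4 - 2), ((c + 3) %% 4); split; first by rewrite ltn_mod.
  move: h4; rewrite /dvdn; have := divn_eq (c + 3) 4; lia.
have [p [hp hl]] : exists p, SC J k p.
  case: J hJ hv => [|[|[|[|J]]]] // _ hv; [|apply: fc_1|apply: fc_2|apply: fc_3].
  by move: h4; rewrite hv; rewrite /dvdn; lia.
exists p; rewrite hv; split => //.
apply: perm_trans; first exact: hl. rewrite (_ : 4 * k.+2 + J - 3 = c); last lia.
by [].
Qed.

Lemma pl_pairmap v x s : path_lengths v (x :: s) = pairmap (edge_len v) x s.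
Proof. by rewrite /path_lengths; elim: s x => //= y s IH x; rewrite IH. Qed.

Lemma pl_lin v p : path_lengths v p = map (fun d => minn d (v - d)) (lin p).
Proof.
case: p => // x s; rewrite pl_pairmap /=.
by elim: s x => //= y s IH x; rewrite IH.
Qed.

Lemma edge_mod v d x y : d %| v -> x < v -> y < v -> d %| edge_len v x y -> x %% d = y %% d.
Proof.
move=> dv hx hy; rewrite /edge_len.
wlog hxy : x y hx hy / y <= x.
  move=> W; case: (leqP y x) => h; first exact: W.
  rewrite /absdiff addnC => H; symmetry; apply: W => //; exact: ltnW.
have -> : absdiff x y = x - y by rewrite /absdiff; lia.
have hle : x - y <= v by lia.
have [-> | ->] : minn (x - y) (v - (x - y)) = x - y \/ minn (x - y) (v - (x - y)) = v - (x - y) by lia.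
  by move=> h; apply/eqP; rewrite eqn_mod_dvd.
by rewrite dvdn_subr // => h; apply/eqP; rewrite eqn_mod_dvd.
Qed.

Lemma undup_pos (T : eqType) (z : T) t : 0 < size (undup (z :: t)).
Proof.
have : z \in undup (z :: t) by rewrite mem_undup mem_head.
by case: (undup _).
Qed.

Lemma undup_cons_size (T : eqType) (z : T) t : size (undup (z :: t)) = (z \notin t) + size (undup t).
Proof. by rewrite /=; case: ifP. Qed.

Lemma key v d x s : d %| v -> all (fun y => y < v) (x :: s) ->
  count (fun e => d %| e) (pairmap (edge_len v) x s) + (size (undup (map (modn^~ d) (x :: s)))).-1
  <= size s.
Proof.
move=> dv; elim: s x => [|y s IH] x; first by rewrite /= addn0.
move=> H; have /andP [hx /andP [hy hs]] := H.
have IH' := IH y (proj2 (andP H)).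
have U1 := undup_pos (y %% d) (map (modn^~ d) s).
change (pairmap (edge_len v) x (y :: s)) with (edge_len v x y :: pairmap (edge_len v) y s).
rewrite count_cons map_cons undup_cons_size.
rewrite map_cons in IH' U1 *.
move: IH' U1; set U := size (undup _); set C := count _ _ => IH' U1.
case hd: (d %| edge_len v x y).
  by rewrite (edge_mod dv hx hy hd) mem_head /=; lia.
by case: (x %% d \notin _) => /=; lia.
Qed.

Lemma nec v p d : 0 < v -> perm_eq p (iota 0 v) -> d %| v ->
  count (fun x => d %| x) (path_lengths v p) <= v - d.
Proof.
move=> v0 hp dv.
have sp : size p = v by rewrite (perm_size hp) size_iota.
case: p hp sp => [|x s] hp sp; first by rewrite /= in sp; lia.
rewrite pl_pairmap.
have hall : all (fun y => y < v) (x :: s).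
  by apply/allP => y; rewrite (perm_mem hp) mem_iota.
have K := key dv hall.
have d0 : 0 < d by apply: dvdn_gt0 dv.
have : d <= size (undup (map (modn^~ d) (x :: s))).
  suff : size (iota 0 d) <= size (undup (map (modn^~ d) (x :: s))) by rewrite size_iota.
  apply: uniq_leq_size; first exact: iota_uniq.
  move=> i; rewrite mem_iota add0n => /andP [_ hi].
  rewrite mem_undup; apply/mapP; exists i.
    rewrite (perm_mem hp) mem_iota /=; apply: leq_trans hi _; exact: dvdn_leq.
  by rewrite /= modn_small.
move: sp K => /= sp K; lia.
Qed.

Theorem proposition5p1 (a b c : nat) :
  1 <= a -> 1 <= b -> 1 <= c ->
  let v := a + b + c + 1 in
  4 <= v./2 ->
  (exists p : seq nat, ham_path v p /\ perm_eq (path_lengths v p) (L124 a b c))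
  <->
  (forall d : nat, d %| v -> count (fun x => d %| x) (L124 a b c) <= v - d).
Proof.
move=> ha hb hc v hv; have v8 : 8 <= v by move: hv; rewrite /v; lia.
split.
  move=> [p [hp hl]] d dv.
  rewrite -(permP hl); apply: nec => //; lia.
move=> H.
case: (leqP 3 (a + b)) => hab.
  have [p [hp hl]] := linear ha hb hc hab.
  exists p; split => //; rewrite pl_lin.
  have -> : map (fun d => minn d (v - d)) (lin p) = lin p.
    rewrite -[RHS]map_id; apply/eq_in_map => d; rewrite (perm_mem hl) /L124 !mem_cat !mem_nseq.
    case/or3P => /andP [_ /eqP ->]; lia.
  exact: hl.
have [ha1 hb1] : a = 1 /\ b = 1 by lia.
rewrite /v ha1 hb1 in H *.
have h4 : ~~ (4 %| c + 3).
  apply/negP => h4; move: (H 4); rewrite (_ : 1 + 1 + c + 1 = c + 3); last lia.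
  move=> /(_ h4); rewrite /L124 !count_cat !count_nseq /=; lia.
have [p [hp hl]] := cyclic (c := c) ltac:(lia) h4.
exists p; rewrite (_ : 1 + 1 + c + 1 = c + 3); last lia.
by split => //; rewrite pl_lin.
Qed.
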